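(* Let $a=\pi/8$ and let $(C_4,g_c)$ be the quotient of the singular torus $(T,g_c)$ (defined below) by the cyclic group generated by the isometry $\tau$ induced by $(x,y,z)\mapsto(-y,x,z+\pi/2)$. Then the systole of $(C_4,g_c)$ equals $\pi/2$ and $$\frac{\mathrm{Sys}(C_4,g_c)^3}{\mathrm{Vol}(C_4,g_c)}>1.$$
   Context: $\Delta\subset\mathbb{R}^2$ is the square lattice generated by $(2a,0)$ and $(0,2a)$. On $\mathbb{R}^3$ with coordinates $(x,y,z)$, $h=dx^2+dy^2+\cos^2\!\big(\mathrm{dist}((x,y),\Delta)\big)\,dz^2$ is a continuous Riemannian metric ($\mathrm{dist}$ Euclidean in $\mathbb{R}^2$). $(T,g_c)$ is the quotient of $(\mathbb{R}^3,h)$ by the translations $(x,y,z)\mapsto(x+4a,y,z)$, $(x,y,z)\mapsto(x,y+4a,z)$, $(x,y,z)\mapsto(x,y,z+2\pi)$. $\tau$ is a fixed-point-free isometry of order $4$ of $(T,g_c)$ and the quotient is homeomorphic to the orientable Bieberbach manifold of type $C_4$ (holonomy $\mathbb{Z}_4$). $\mathrm{Sys}$ is the infimum of lengths $\int (h(\gamma',\gamma'))^{1/2}dt$ of non-contractible piecewise smooth closed curves and $\mathrm{Vol}$ the Riemannian volume. *)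

(* Defs.v *)
From Stdlib Require Import Reals Lra ZArith.
From Coquelicot Require Import Coquelicot.
Open Scope R_scope.

Definition pt : Type := (R * R * R)%type.

Definition distDelta (a x y : R) : R :=
  real (Glb_Rbar (fun d => exists i j : Z,
     d = sqrt ((x - 2 * a * IZR i) ^ 2 + (y - 2 * a * IZR j) ^ 2))).

Definition h_speed2 (a x y dx dy dz : R) : R :=
  dx ^ 2 + dy ^ 2 + (cos (distDelta a x y)) ^ 2 * dz ^ 2.

(* Deck group Gamma of R^3 -> C_4 = (R^3/translations)/<tau>, generated by the
   three translations and the lift of tau. *)
Definition tx (a : R) (p : pt) : pt := let '(x, y, z) := p in (x + 4 * a, y, z).
Definition txi (a : R) (p : pt) : pt := let '(x, y, z) := p in (x - 4 * a, y, z).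
Definition ty (a : R) (p : pt) : pt := let '(x, y, z) := p in (x, y + 4 * a, z).
Definition tyi (a : R) (p : pt) : pt := let '(x, y, z) := p in (x, y - 4 * a, z).
Definition tz (p : pt) : pt := let '(x, y, z) := p in (x, y, z + 2 * PI).
Definition tzi (p : pt) : pt := let '(x, y, z) := p in (x, y, z - 2 * PI).
Definition tau (p : pt) : pt := let '(x, y, z) := p in (- y, x, z + PI / 2).
Definition taui (p : pt) : pt := let '(x, y, z) := p in (y, - x, z - PI / 2).

Definition generator (a : R) (s : pt -> pt) : Prop :=
  s = tx a \/ s = txi a \/ s = ty a \/ s = tyi a \/
  s = tz \/ s = tzi \/ s = tau \/ s = taui.

Inductive in_Gamma (a : R) : (pt -> pt) -> Prop :=
  | Gamma_id : in_Gamma a (fun p => p)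
  | Gamma_step : forall f s, in_Gamma a f -> generator a s ->
      in_Gamma a (fun p => s (f p)).

Definition C1_on (f : R -> R) (s t : R) : Prop :=
  exists g : R -> R,
    (forall u, s <= u <= t -> g u = f u) /\
    (forall u, ex_derive g u) /\ (forall u, continuous (Derive g) u).

Definition pw_smooth (cx cy cz : R -> R) : Prop :=
  exists (n : nat) (p : nat -> R),
    p 0%nat = 0 /\ p n = 1 /\
    (forall i, (i < n)%nat -> p i < p (S i)) /\
    (forall i, (i < n)%nat ->
       C1_on cx (p i) (p (S i)) /\ C1_on cy (p i) (p (S i)) /\
       C1_on cz (p i) (p (S i))).

Definition h_length (a : R) (cx cy cz : R -> R) : R :=
  RInt (fun u => sqrt (h_speed2 a (cx u) (cy u)
                         (Derive cx u) (Derive cy u) (Derive cz u))) 0 1.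

(* Piecewise smooth non-contractible closed curves of C_4 = R^3/Gamma, given
   by their lifts to the universal cover R^3: the lift ends at g(start) for a
   non-identity deck transformation g. *)
Definition noncontractible_loop (a : R) (cx cy cz : R -> R) : Prop :=
  pw_smooth cx cy cz /\
  exists g : pt -> pt, in_Gamma a g /\ g <> (fun p => p) /\
    (cx 1, cy 1, cz 1) = g (cx 0, cy 0, cz 0).

Definition Sys (a : R) : Rbar :=
  Glb_Rbar (fun L => exists cx cy cz,
     noncontractible_loop a cx cy cz /\ L = h_length a cx cy cz).

(* Riemannian volume of C_4: integral of sqrt(det h) over the fundamental
   domain [0,4a] x [0,4a] x [0,pi/2] of Gamma. *)
Definition Vol (a : R) : R :=
  RInt (fun x => RInt (fun y => RInt (fun z =>
     sqrt ((cos (distDelta a x y)) ^ 2)) 0 (PI / 2)) 0 (4 * a)) 0 (4 * a).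

(* Main.v *)
Require Import Defs.
From Stdlib Require Import Reals Lra Lia ZArith Psatz.
From Coquelicot Require Import Coquelicot.
Open Scope R_scope.

Lemma sqrt_le_B (A B : R) : 0 <= B -> A <= B * B -> sqrt A <= B.
Proof.
  intros HB HA. rewrite <- (sqrt_square B) by lra.
  destruct (Rle_lt_dec 0 A).
  - apply sqrt_le_1_alt; lra.
  - rewrite sqrt_neg_0 by lra. apply sqrt_pos.
Qed.

Lemma sqrt_ge_abs (u v : R) : Rabs u <= sqrt (u ^ 2 + v ^ 2).
Proof.
  rewrite <- sqrt_Rsqr_abs. apply sqrt_le_1_alt. unfold Rsqr. nra.
Qed.

Lemma sqrt_le_sum_abs (u v : R) : sqrt (u ^ 2 + v ^ 2) <= Rabs u + Rabs v.
Proof.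
  apply sqrt_le_B. generalize (Rabs_pos u) (Rabs_pos v); lra.
  assert (u ^ 2 = Rabs u * Rabs u).
  { rewrite <- Rabs_mult. rewrite Rabs_right; [ring| nra]. }
  assert (v ^ 2 = Rabs v * Rabs v).
  { rewrite <- Rabs_mult. rewrite Rabs_right; [ring| nra]. }
  generalize (Rabs_pos u) (Rabs_pos v); nra.
Qed.

Lemma tri2 (u1 u2 v1 v2 : R) :
  sqrt ((u1 + v1) ^ 2 + (u2 + v2) ^ 2) <= sqrt (u1 ^ 2 + u2 ^ 2) + sqrt (v1 ^ 2 + v2 ^ 2).
Proof.
  apply sqrt_le_B.
  - generalize (sqrt_pos (u1^2+u2^2)) (sqrt_pos (v1^2+v2^2)); lra.
  - assert (HU0 : 0 <= u1^2+u2^2) by nra. assert (HV0 : 0 <= v1^2+v2^2) by nra.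
    assert (HU := sqrt_sqrt (u1^2+u2^2) HU0).
    assert (HV := sqrt_sqrt (v1^2+v2^2) HV0).
    assert (HP : 0 <= sqrt (u1^2+u2^2) * sqrt (v1^2+v2^2)).
    { apply Rmult_le_pos; apply sqrt_pos. }
    assert (HC : u1 * v1 + u2 * v2 <= sqrt (u1^2+u2^2) * sqrt (v1^2+v2^2)).
    { destruct (Rle_lt_dec (u1 * v1 + u2 * v2) 0). lra.
      rewrite <- sqrt_mult by nra.
      rewrite <- (sqrt_square (u1 * v1 + u2 * v2)) by lra.
      apply sqrt_le_1_alt. pose proof (pow2_ge_0 (u1*v2 - u2*v1)). nra. }
    nra.
Qed.

Section DD.
Variable a : R.
Hypothesis Ha : 0 < a.

Definition DSet (x y : R) := fun d => exists i j : Z,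
     d = sqrt ((x - 2 * a * IZR i) ^ 2 + (y - 2 * a * IZR j) ^ 2).

Lemma dD_glb x y : Glb_Rbar (DSet x y) = Finite (distDelta a x y).
Proof.
  unfold distDelta. fold (DSet x y).
  destruct (Glb_Rbar_correct (DSet x y)) as [H1 H2].
  destruct (Glb_Rbar (DSet x y)) eqn:E; simpl; auto.
  - exfalso. specialize (H1 (sqrt ((x - 2 * a * IZR 0) ^ 2 + (y - 2 * a * IZR 0) ^ 2))).
    apply H1. exists 0%Z, 0%Z. reflexivity.
  - exfalso. assert (Rbar_le (Finite 0) m_infty).
    { apply H2. intros z [i [j ->]]. simpl. apply sqrt_pos. }
    simpl in H. auto.
Qed.

Lemma dD_le x y i j : distDelta a x y <= sqrt ((x - 2 * a * IZR i) ^ 2 + (y - 2 * a * IZR j) ^ 2).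
Proof.
  destruct (Glb_Rbar_correct (DSet x y)) as [H1 H2].
  rewrite dD_glb in H1. apply (H1 _). exists i, j. reflexivity.
Qed.

Lemma dD_ge x y m : (forall i j, m <= sqrt ((x - 2 * a * IZR i) ^ 2 + (y - 2 * a * IZR j) ^ 2)) ->
  m <= distDelta a x y.
Proof.
  intro H. destruct (Glb_Rbar_correct (DSet x y)) as [H1 H2].
  rewrite dD_glb in H2. apply (H2 (Finite m)). intros z [i [j ->]]. simpl. apply H.
Qed.

Lemma dD_pos x y : 0 <= distDelta a x y.
Proof. apply dD_ge. intros; apply sqrt_pos. Qed.

Lemma dD_lip x y x' y' :
  distDelta a x y <= distDelta a x' y' + sqrt ((x - x') ^ 2 + (y - y') ^ 2).
Proof.
  assert (distDelta a x y - sqrt ((x - x') ^ 2 + (y - y') ^ 2) <= distDelta a x' y'); [|lra].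
  apply dD_ge. intros i j.
  generalize (dD_le x y i j).
  generalize (tri2 (x - x') (y - y') (x' - 2 * a * IZR i) (y' - 2 * a * IZR j)).
  replace (x - x' + (x' - 2 * a * IZR i)) with (x - 2 * a * IZR i) by ring.
  replace (y - y' + (y' - 2 * a * IZR j)) with (y - 2 * a * IZR j) by ring.
  lra.
Qed.

Lemma round_near x : exists i : Z, Rabs (x - 2 * a * IZR i) <= a.
Proof.
  destruct (archimed (x / (2 * a) - 1/2)) as [H1 H2].
  exists (up (x / (2 * a) - 1 / 2)).
  set (k := IZR (up (x / (2 * a) - 1 / 2))) in *.
  assert (Hx : x = 2 * a * (x / (2 * a))) by (field; lra).
  apply Rabs_le. split.
  - assert (2 * a * k <= 2 * a * (x / (2 * a)) + a) by nra. lra.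
  - assert (2 * a * (x / (2 * a)) - a < 2 * a * k) by nra. lra.
Qed.

Lemma dD_le_2a x y : distDelta a x y <= 2 * a.
Proof.
  destruct (round_near x) as [i Hi]. destruct (round_near y) as [j Hj].
  eapply Rle_trans. apply (dD_le x y i j).
  eapply Rle_trans. apply sqrt_le_sum_abs. lra.
Qed.

Lemma dD_le_center x y i j :
  distDelta a x y <= sqrt ((x - 2 * a * IZR i) ^ 2 + (y - 2 * a * IZR j) ^ 2).
Proof. apply dD_le. Qed.

Lemma dD_strip x y : a / 2 <= x <= 3 * a / 2 -> a / 2 <= distDelta a x y.
Proof.
  intro Hx. apply dD_ge. intros i j.
  eapply Rle_trans; [| apply sqrt_ge_abs].
  destruct (Z_le_gt_dec i 0) as [Hi | Hi].
  - apply IZR_le in Hi. rewrite Rabs_right; nra.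
  - assert (1 <= IZR i) by (apply IZR_le; lia).
    rewrite Rabs_left1; nra.
Qed.

End DD.

Lemma lip_cont (f : R -> R) y0 K : 0 <= K ->
  (forall y, Rabs (f y - f y0) <= K * Rabs (y - y0)) -> continuous f y0.
Proof.
  intros HK H. unfold continuous. apply filterlim_locally.
  intro eps. assert (He : 0 < eps / (K + 1)).
  { apply Rdiv_lt_0_compat. apply cond_pos. lra. }
  exists (mkposreal _ He). intros y Hy.
  change (Rabs (f y - f y0) < eps).
  change (Rabs (y - y0) < eps / (K + 1)) in Hy.
  specialize (H y). assert (Hpos := cond_pos eps).
  assert (K * Rabs (y - y0) <= K * (eps / (K+1))).
  { apply Rmult_le_compat_l; lra. }
  assert (K * (eps / (K+1)) < eps).
  { apply (Rmult_lt_reg_r (K+1)). lra. field_simplify; lra. }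
  lra.
Qed.

Lemma cos_lip u v : Rabs (cos u - cos v) <= Rabs (u - v).
Proof.
  destruct (MVT_gen cos v u (fun x => - sin x)) as [c [_ Hc]].
  - intros; apply is_derive_cos.
  - intros x _. apply continuity_cos.
  - rewrite Hc, Rabs_mult. rewrite <- (Rmult_1_l (Rabs (u - v))) at 2.
    apply Rmult_le_compat_r. apply Rabs_pos. rewrite Rabs_Ropp.
    apply Rabs_le. apply SIN_bound.
Qed.

Lemma cos_le_mono x y : 0 <= x -> x <= y -> y <= PI -> cos y <= cos x.
Proof.
  intros. destruct (Req_dec x y). subst; lra.
  left. apply cos_decreasing_1; lra.
Qed.

Definition bb := PI / 2.
Definition aa := PI / 8.
Lemma aa_pos : 0 < aa. Proof. unfold aa; generalize PI_RGT_0; lra. Qed.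

Definition fV (x y : R) := Rabs (cos (distDelta aa x y)).

Lemma dD_abs x y x' y' :
  Rabs (distDelta aa x y - distDelta aa x' y') <= sqrt ((x - x') ^ 2 + (y - y') ^ 2).
Proof.
  apply Rabs_le. split.
  - generalize (dD_lip aa x' y' x y).
    replace ((x' - x) ^ 2 + (y' - y) ^ 2) with ((x - x') ^ 2 + (y - y') ^ 2) by ring. lra.
  - generalize (dD_lip aa x y x' y'). lra.
Qed.

Lemma fV_lip x y x' y' : Rabs (fV x y - fV x' y') <= sqrt ((x - x') ^ 2 + (y - y') ^ 2).
Proof.
  unfold fV. eapply Rle_trans. apply Rabs_triang_inv2.
  eapply Rle_trans. apply cos_lip. apply dD_abs.
Qed.

Lemma fV_cont_y x y0 : continuous (fun y => fV x y) y0.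
Proof.
  apply (lip_cont _ _ 1). lra. intro y.
  eapply Rle_trans. apply fV_lip. rewrite Rmult_1_l.
  replace ((x - x) ^ 2 + (y - y0) ^ 2) with ((y - y0)^2 + 0^2) by ring.
  eapply Rle_trans. apply sqrt_le_sum_abs. rewrite Rabs_R0. lra.
Qed.

Lemma ex_RInt_cont_R (f : R -> R) u v :
  (forall z, Rmin u v <= z <= Rmax u v -> continuous f z) -> ex_RInt f u v.
Proof. intro H. apply (ex_RInt_continuous (V := R_CompleteNormedModule)). exact H. Qed.

Lemma fV_ex x u v : ex_RInt (fun y => fV x y) u v.
Proof. apply ex_RInt_cont_R. intros; apply fV_cont_y. Qed.

Lemma PI4_le : PI / 4 <= PI. Proof. generalize PI_RGT_0; lra. Qed.

Lemma dD_le_PI4 x y : distDelta aa x y <= PI / 4.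
Proof. generalize (dD_le_2a aa aa_pos x y). unfold aa. lra. Qed.

Lemma cos_dD_ge x y : cos (PI / 4) <= cos (distDelta aa x y).
Proof.
  apply cos_le_mono. apply dD_pos. apply dD_le_PI4. apply PI4_le.
Qed.

Lemma cosPI4_pos : 0 < cos (PI / 4).
Proof. rewrite cos_PI4. apply Rdiv_lt_0_compat. lra. apply sqrt_lt_R0; lra. Qed.

Lemma fV_bounds x y : cos (PI / 4) <= fV x y <= 1.
Proof.
  unfold fV. generalize (cos_dD_ge x y) cosPI4_pos; intros.
  rewrite Rabs_right by lra. split. lra. apply COS_bound.
Qed.

Lemma fV_strip x y : aa / 2 <= x <= 3 * aa / 2 -> fV x y <= cos (aa / 2).
Proof.
  intro H. unfold fV. generalize (cos_dD_ge x y) cosPI4_pos; intros.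
  rewrite Rabs_right by lra.
  apply cos_le_mono. generalize aa_pos; lra. apply dD_strip. apply aa_pos. auto.
  generalize (dD_le_PI4 x y) PI4_le; lra.
Qed.

Definition mV x := RInt (fun y => fV x y) 0 bb.

Lemma bb_pos : 0 < bb. Proof. unfold bb; generalize PI_RGT_0; lra. Qed.

Lemma RInt_const_R (c u v : R) : RInt (fun _ => c) u v = (v - u) * c.
Proof. rewrite RInt_const. reflexivity. Qed.

Lemma mV_le x : mV x <= bb.
Proof.
  unfold mV. apply Rle_trans with (RInt (fun _ => 1) 0 bb).
  apply RInt_le. generalize bb_pos; lra. apply fV_ex. apply ex_RInt_const.
  intros; apply fV_bounds.
  rewrite RInt_const_R; lra.
Qed.

Lemma mV_ge x : bb * cos (PI/4) <= mV x.
Proof.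
  unfold mV. apply Rle_trans with (RInt (fun _ => cos (PI/4)) 0 bb).
  rewrite RInt_const_R; lra.
  apply RInt_le. generalize bb_pos; lra. apply ex_RInt_const. apply fV_ex.
  intros; apply fV_bounds.
Qed.

Lemma mV_strip x : aa / 2 <= x <= 3 * aa / 2 -> mV x <= bb * cos (aa / 2).
Proof.
  intro Hx. unfold mV. apply Rle_trans with (RInt (fun _ => cos (aa/2)) 0 bb).
  apply RInt_le. generalize bb_pos; lra. apply fV_ex. apply ex_RInt_const.
  intros; apply fV_strip; auto.
  rewrite RInt_const_R; lra.
Qed.

Lemma mV_lip x x' : Rabs (mV x - mV x') <= bb * Rabs (x - x').
Proof.
  unfold mV. replace (RInt (fun y => fV x y) 0 bb - RInt (fun y => fV x' y) 0 bb)
    with (RInt (fun y => fV x y - fV x' y) 0 bb).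
  2:{ rewrite (RInt_minus (fun y => fV x y) (fun y => fV x' y)) by apply fV_ex. reflexivity. }
  replace (bb * Rabs (x - x')) with ((bb - 0) * Rabs (x - x')) by ring.
  apply abs_RInt_le_const. generalize bb_pos; lra.
  apply (ex_RInt_minus (fun y => fV x y) (fun y => fV x' y)); apply fV_ex.
  intros t _. eapply Rle_trans. apply fV_lip.
  replace ((x - x') ^ 2 + (t - t) ^ 2) with ((x - x')^2 + 0^2) by ring.
  eapply Rle_trans. apply sqrt_le_sum_abs. rewrite Rabs_R0. lra.
Qed.

Lemma mV_cont x0 : continuous mV x0.
Proof.
  apply (lip_cont _ _ bb). generalize bb_pos; lra. intro; apply mV_lip.
Qed.

Lemma mV_ex u v : ex_RInt mV u v.
Proof. apply ex_RInt_cont_R. intros; apply mV_cont. Qed.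

Lemma Vol_eq : Vol aa = bb * RInt mV 0 bb.
Proof.
  unfold Vol. replace (4 * aa) with bb by (unfold aa, bb; field).
  transitivity (scal bb (RInt mV 0 bb)); [| reflexivity].
  rewrite <- (RInt_scal mV 0 bb bb) by apply mV_ex.
  apply RInt_ext. intros x _. unfold mV.
  transitivity (scal bb (RInt (fun y => fV x y) 0 bb)); [| reflexivity].
  rewrite <- (RInt_scal (fun y => fV x y) 0 bb bb) by apply fV_ex.
  apply RInt_ext. intros y _.
  rewrite RInt_const. unfold fV. fold bb.
  replace (cos (distDelta aa x y) ^ 2) with (Rsqr (cos (distDelta aa x y))) by (unfold Rsqr; ring).
  rewrite sqrt_Rsqr_abs. unfold scal; simpl; unfold mult; simpl. ring.
Qed.

Lemma Vol_bounds : 0 < Vol aa < bb ^ 3.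
Proof.
  rewrite Vol_eq. generalize bb_pos aa_pos cosPI4_pos; intros.
  assert (Hcs : cos (aa / 2) < 1).
  { rewrite <- cos_0. apply cos_decreasing_1; unfold aa in *; generalize PI_RGT_0; lra. }
  assert (Hab : bb = 4 * aa) by (unfold aa, bb; field).
  split.
  - apply Rmult_lt_0_compat. auto.
    apply Rlt_le_trans with (RInt (fun _ => bb * cos (PI/4)) 0 bb).
    rewrite RInt_const_R. apply Rmult_lt_0_compat; [lra| apply Rmult_lt_0_compat; lra].
    apply RInt_le. lra. apply ex_RInt_const. apply mV_ex. intros; apply mV_ge.
  - rewrite <- (RInt_Chasles mV 0 (aa/2) bb) by apply mV_ex.
    rewrite <- (RInt_Chasles mV (aa/2) (3*aa/2) bb) by apply mV_ex.
    unfold plus; simpl.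
    assert (K1 : RInt mV 0 (aa/2) <= RInt (fun _ => bb) 0 (aa/2)).
    { apply RInt_le. lra. apply mV_ex. apply ex_RInt_const. intros; apply mV_le. }
    assert (K2 : RInt mV (aa/2) (3*aa/2) <= RInt (fun _ => bb * cos (aa/2)) (aa/2) (3*aa/2)).
    { apply RInt_le. lra. apply mV_ex. apply ex_RInt_const. intros; apply mV_strip; lra. }
    assert (K3 : RInt mV (3*aa/2) bb <= RInt (fun _ => bb) (3*aa/2) bb).
    { apply RInt_le. lra. apply mV_ex. apply ex_RInt_const. intros; apply mV_le. }
    rewrite !RInt_const_R in *.
    assert (RInt mV 0 (aa / 2) + (RInt mV (aa / 2) (3 * aa / 2) + RInt mV (3 * aa / 2) bb) < bb * bb).
    { assert (aa * bb * cos (aa/2) < aa * bb * 1). apply Rmult_lt_compat_l; nra. nra. }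
    replace (bb ^ 3) with (bb * (bb * bb)) by ring.
    apply Rmult_lt_compat_l; lra.
Qed.

Definition rotx (n : Z) (x y : R) : R :=
  match (n mod 4)%Z with 0%Z => x | 1%Z => - y | 2%Z => - x | _ => y end.
Definition roty (n : Z) (x y : R) : R :=
  match (n mod 4)%Z with 0%Z => y | 1%Z => x | 2%Z => - y | _ => - x end.

Definition NF (a : R) (n i j : Z) (p : pt) : pt :=
  let '(x, y, z) := p in
  (rotx n x y + 4 * a * IZR i, roty n x y + 4 * a * IZR j, z + IZR n * (PI / 2)).

Lemma mod4_cases n : (n mod 4 = 0 \/ n mod 4 = 1 \/ n mod 4 = 2 \/ n mod 4 = 3)%Z.
Proof. pose proof (Z.mod_pos_bound n 4). lia. Qed.

Lemma mod4_succ n : ((n + 1) mod 4 = (n mod 4 + 1) mod 4)%Z.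
Proof. rewrite Zplus_mod. rewrite (Zmod_small 1) by lia. reflexivity. Qed.
Lemma mod4_pred n : ((n - 1) mod 4 = (n mod 4 + 3) mod 4)%Z.
Proof.
  replace (n - 1)%Z with (n + 3 + (-1) * 4)%Z by ring. rewrite Z_mod_plus_full.
  rewrite Zplus_mod. rewrite (Zmod_small 3) by lia. reflexivity.
Qed.

Lemma rot_succ n x y : rotx (n + 1) x y = - roty n x y /\ roty (n + 1) x y = rotx n x y.
Proof.
  unfold rotx, roty. rewrite mod4_succ.
  destruct (mod4_cases n) as [H|[H|[H|H]]]; rewrite H; simpl; split; ring.
Qed.
Lemma rot_pred n x y : rotx (n - 1) x y = roty n x y /\ roty (n - 1) x y = - rotx n x y.
Proof.
  unfold rotx, roty. rewrite mod4_pred.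
  destruct (mod4_cases n) as [H|[H|[H|H]]]; rewrite H; simpl; split; ring.
Qed.
Lemma rot_p4 n x y : rotx (n + 4) x y = rotx n x y /\ roty (n + 4) x y = roty n x y.
Proof.
  unfold rotx, roty. replace (n + 4)%Z with (n + 1 * 4)%Z by ring. rewrite Z_mod_plus_full. auto.
Qed.
Lemma rot_m4 n x y : rotx (n - 4) x y = rotx n x y /\ roty (n - 4) x y = roty n x y.
Proof.
  unfold rotx, roty. replace (n - 4)%Z with (n + (-1) * 4)%Z by ring. rewrite Z_mod_plus_full. auto.
Qed.

Ltac peq := match goal with |- (?a,?b,?c) = (?d,?e,?f) =>
  cut (a = d /\ b = e /\ c = f); [intros [E1 [E2 E3]]; congruence | split; [|split]] end.

Lemma Gamma_NF a g : in_Gamma a g -> exists n i j, forall p, g p = NF a n i j p.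
Proof.
  induction 1 as [| f s Hf IH Hs].
  - exists 0%Z, 0%Z, 0%Z. intros [[x y] z]. unfold NF, rotx, roty. simpl.
    peq; try ring; field.
  - destruct IH as [n [i [j IH]]].
    destruct Hs as [->|[->|[->|[->|[->|[->|[->| ->]]]]]]].
    + exists n, (i + 1)%Z, j. intros p. rewrite IH. destruct p as [[x y] z].
      unfold NF, tx. rewrite plus_IZR. peq; try ring; field.
    + exists n, (i - 1)%Z, j. intros p. rewrite IH. destruct p as [[x y] z].
      unfold NF, txi. rewrite minus_IZR. peq; try ring; field.
    + exists n, i, (j + 1)%Z. intros p. rewrite IH. destruct p as [[x y] z].
      unfold NF, ty. rewrite plus_IZR. peq; try ring; field.
    + exists n, i, (j - 1)%Z. intros p. rewrite IH. destruct p as [[x y] z].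
      unfold NF, tyi. rewrite minus_IZR. peq; try ring; field.
    + exists (n + 4)%Z, i, j. intros p. rewrite IH. destruct p as [[x y] z].
      unfold NF, tz. destruct (rot_p4 n x y) as [R1 R2]. rewrite R1, R2, plus_IZR.
      peq; try ring; field.
    + exists (n - 4)%Z, i, j. intros p. rewrite IH. destruct p as [[x y] z].
      unfold NF, tzi. destruct (rot_m4 n x y) as [R1 R2]. rewrite R1, R2, minus_IZR.
      peq; try ring; field.
    + exists (n + 1)%Z, (- j)%Z, i. intros p. rewrite IH. destruct p as [[x y] z].
      unfold NF, tau. destruct (rot_succ n x y) as [R1 R2]. rewrite R1, R2, plus_IZR, opp_IZR.
      peq; try ring; field.
    + exists (n - 1)%Z, j, (- i)%Z. intros p. rewrite IH. destruct p as [[x y] z].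
      unfold NF, taui. destruct (rot_pred n x y) as [R1 R2]. rewrite R1, R2, minus_IZR, opp_IZR.
      peq; try ring; field.
Qed.

Lemma cont_add (f g : R -> R) x : continuous f x -> continuous g x -> continuous (fun y => f y + g y) x.
Proof. intros. apply (continuous_plus f g x); auto. Qed.
Lemma cont_mul (f g : R -> R) x : continuous f x -> continuous g x -> continuous (fun y => f y * g y) x.
Proof. intros. apply (continuous_mult f g x); auto. Qed.
Lemma cont_pow2 (f : R -> R) x : continuous f x -> continuous (fun y => f y ^ 2) x.
Proof.
  intros. apply (continuous_ext (fun y => f y * (f y * 1))). intros; simpl; ring.
  apply cont_mul; auto. apply cont_mul; auto. apply continuous_const.
Qed.

Lemma dD_abs_gen a x y x' y' :
  Rabs (distDelta a x y - distDelta a x' y') <= sqrt ((x - x') ^ 2 + (y - y') ^ 2).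
Proof.
  apply Rabs_le. split.
  - generalize (dD_lip a x' y' x y).
    replace ((x' - x) ^ 2 + (y' - y) ^ 2) with ((x - x') ^ 2 + (y - y') ^ 2) by ring. lra.
  - generalize (dD_lip a x y x' y'). lra.
Qed.

Lemma dD_cont_comp a (gx gy : R -> R) u : continuous gx u -> continuous gy u ->
  continuous (fun v => distDelta a (gx v) (gy v)) u.
Proof.
  intros Hx Hy. unfold continuous in *. apply filterlim_locally. intro eps.
  assert (He : 0 < eps / 2) by (generalize (cond_pos eps); lra).
  pose proof (proj1 (filterlim_locally gx (gx u)) Hx (mkposreal _ He)) as Lx.
  pose proof (proj1 (filterlim_locally gy (gy u)) Hy (mkposreal _ He)) as Ly.
  generalize (filter_and _ _ Lx Ly). apply filter_imp. intros v [Bx By].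
  change (Rabs (gx v - gx u) < eps / 2) in Bx.
  change (Rabs (gy v - gy u) < eps / 2) in By.
  change (Rabs (distDelta a (gx v) (gy v) - distDelta a (gx u) (gy u)) < eps).
  eapply Rle_lt_trans. apply dD_abs_gen.
  eapply Rle_lt_trans. apply sqrt_le_sum_abs. lra.
Qed.

Lemma exd_cont (f : R -> R) x : ex_derive f x -> continuous f x.
Proof. intro H. apply (ex_derive_continuous (K := R_AbsRing) (V := R_NormedModule)). exact H. Qed.

Definition C1 (g : R -> R) := (forall u, ex_derive g u) /\ (forall u, continuous (Derive g) u).

Definition speedf (a : R) (gx gy gz : R -> R) (u : R) :=
  sqrt (h_speed2 a (gx u) (gy u) (Derive gx u) (Derive gy u) (Derive gz u)).

Lemma speed_cont a gx gy gz : C1 gx -> C1 gy -> C1 gz -> forall u, continuous (speedf a gx gy gz) u.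
Proof.
  intros [Dx Cx] [Dy Cy] [Dz Cz] u. unfold speedf, h_speed2.
  apply continuous_sqrt_comp. apply cont_add. apply cont_add.
  apply cont_pow2; auto. apply cont_pow2; auto.
  apply cont_mul. apply cont_pow2. apply continuous_cos_comp.
  apply dD_cont_comp; apply exd_cont; auto.
  apply cont_pow2; auto.
Qed.

Lemma ex_RInt_cont_all (f : R -> R) u v : (forall z, continuous f z) -> ex_RInt f u v.
Proof. intros; apply ex_RInt_cont_R; auto. Qed.

Lemma piece_bound (f psi : R -> R) s t :
  (forall u, continuous f u) ->
  (forall u, s <= u <= t -> ex_derive psi u /\ Derive psi u <= f u) ->
  forall u v, s <= u -> u <= v -> v <= t -> psi v - psi u <= RInt f u v.
Proof.
  intros Hf Hpsi u v Hsu Huv Hvt.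
  destruct (MVT_gen (fun x => RInt f u x - psi x) u v (fun x => f x - Derive psi x)) as [c [Hc Heq]].
  - rewrite Rmin_left, Rmax_right by lra. intros x Hx.
    apply (is_derive_minus (fun x => RInt f u x) psi).
    + apply (is_derive_RInt f (fun b => RInt f u b) u x).
      apply filter_forall. intro b. apply (RInt_correct (V := R_CompleteNormedModule)).
      apply ex_RInt_cont_all; auto. auto.
    + apply Derive_correct. apply Hpsi. lra.
  - rewrite Rmin_left, Rmax_right by lra. intros x Hx.
    apply continuity_pt_filterlim.
    apply (continuous_minus (fun x => RInt f u x) psi).
    + apply exd_cont. eexists.
      apply (is_derive_RInt f (fun b => RInt f u b) u x).
      apply filter_forall. intro b. apply (RInt_correct (V := R_CompleteNormedModule)).
      apply ex_RInt_cont_all; auto. auto.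
    + apply exd_cont. apply Hpsi. lra.
  - rewrite Rmin_left, Rmax_right in Hc by lra.
    rewrite (RInt_point u f) in Heq. change (@zero R_CompleteNormedModule) with 0 in Heq.
    destruct (Hpsi c) as [_ Hd]. lra.
    assert (0 <= (f c - Derive psi c) * (v - u)) by (apply Rmult_le_pos; lra).
    lra.
Qed.

Lemma loc_eq (f g : R -> R) s t u : s < u < t -> (forall v, s <= v <= t -> f v = g v) ->
  locally u (fun v => g v = f v).
Proof.
  intros Hu H. assert (He : 0 < Rmin (u - s) (t - u)).
  { apply Rmin_pos; lra. }
  exists (mkposreal _ He). intros v Hv. change (Rabs (v - u) < Rmin (u - s) (t - u)) in Hv.
  apply Rabs_def2 in Hv. generalize (Rmin_l (u - s) (t - u)) (Rmin_r (u - s) (t - u)); intros.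
  symmetry; apply H; lra.
Qed.

Section Calib.
Variable a : R.
Variables cx cy cz : R -> R.
Variable Phi : R -> R -> R -> R.
Variable G : R -> R -> R -> Prop.
Hypothesis HG : forall u, 0 <= u <= 1 -> G (cx u) (cy u) (cz u).
Hypothesis HPhi : forall gx gy gz, C1 gx -> C1 gy -> C1 gz -> forall u, G (gx u) (gy u) (gz u) ->
  ex_derive (fun v => Phi (gx v) (gy v) (gz v)) u /\
  Derive (fun v => Phi (gx v) (gy v) (gz v)) u <= speedf a gx gy gz u.

Let psi u := Phi (cx u) (cy u) (cz u).

Lemma piece_calib s t : 0 <= s -> s < t -> t <= 1 ->
  C1_on cx s t -> C1_on cy s t -> C1_on cz s t ->
  forall U V, s <= U -> U <= V -> V <= t ->
  ex_RInt (speedf a cx cy cz) U V /\ psi V - psi U <= RInt (speedf a cx cy cz) U V.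
Proof.
  intros H0s Hst Ht1 [gx [Ex [Dx Cx]]] [gy [Ey [Dy Cy]]] [gz [Ez [Dz Cz]]] U V HsU HUV HVt.
  assert (C1x : C1 gx) by (split; auto).
  assert (C1y : C1 gy) by (split; auto).
  assert (C1z : C1 gz) by (split; auto).
  assert (Hsp : forall w, U < w < V -> speedf a gx gy gz w = speedf a cx cy cz w).
  { intros w Hw. unfold speedf.
    rewrite (Ex w), (Ey w) by lra.
    rewrite (Derive_ext_loc cx gx w), (Derive_ext_loc cy gy w), (Derive_ext_loc cz gz w).
    reflexivity.
    all: apply (loc_eq _ _ s t); [lra | auto]. }
  assert (Hex : ex_RInt (speedf a gx gy gz) U V).
  { apply ex_RInt_cont_all. apply speed_cont; auto. }
  split.
  - apply (ex_RInt_ext (speedf a gx gy gz)); auto.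
    rewrite Rmin_left, Rmax_right by lra. auto.
  - rewrite <- (RInt_ext (speedf a gx gy gz)).
    2:{ rewrite Rmin_left, Rmax_right by lra. auto. }
    assert (Hps : forall w, s <= w <= t -> psi w = Phi (gx w) (gy w) (gz w)).
    { intros w Hw. unfold psi. rewrite <- Ex, <- Ey, <- Ez by lra. reflexivity. }
    rewrite (Hps U), (Hps V) by lra.
    apply (piece_bound (speedf a gx gy gz) (fun v => Phi (gx v) (gy v) (gz v)) s t).
    + apply speed_cont; auto.
    + intros w Hw. apply HPhi; auto.
      rewrite Ex, Ey, Ez by lra. apply HG. lra.
    + lra.
    + lra.
    + lra.
Qed.

Lemma calib : pw_smooth cx cy cz ->
  forall U V, 0 <= U -> U <= V -> V <= 1 ->
  ex_RInt (speedf a cx cy cz) U V /\ psi V - psi U <= RInt (speedf a cx cy cz) U V.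
Proof.
  intros [n [p [P0 [Pn [Pinc Pc1]]]]].
  assert (Hpos : forall k, (k <= n)%nat -> 0 <= p k).
  { induction k; intros. rewrite P0; lra.
    assert (p k < p (S k)) by (apply Pinc; lia). specialize (IHk ltac:(lia)). lra. }
  assert (Hle1 : forall k, (k <= n)%nat -> p k <= 1).
  { assert (M : forall m k, (k <= m)%nat -> (m <= n)%nat -> p k <= p m).
    { induction m; intros k Hk Hm. replace k with 0%nat by lia. lra.
      destruct (Nat.eq_dec k (S m)). subst; lra.
      assert (p m < p (S m)) by (apply Pinc; lia). specialize (IHm k ltac:(lia) ltac:(lia)). lra. }
    intros k Hk. rewrite <- Pn. apply M; auto. }
  assert (Q : forall k, (k <= n)%nat -> forall U V, 0 <= U -> U <= V -> V <= p k ->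
    ex_RInt (speedf a cx cy cz) U V /\ psi V - psi U <= RInt (speedf a cx cy cz) U V).
  { induction k; intros Hk U V H0U HUV HV.
    - rewrite P0 in HV. assert (U = V) by lra. subst V.
      split. apply ex_RInt_point. rewrite (RInt_point U). change (@zero R_CompleteNormedModule) with 0. lra.
    - assert (Hk' : (k < n)%nat) by lia.
      assert (Hinc := Pinc k Hk'). destruct (Pc1 k Hk') as [C1x [C1y C1z]].
      assert (Hpk := Hpos k ltac:(lia)). assert (Hpk1 := Hle1 (S k) Hk).
      destruct (Rle_lt_dec V (p k)) as [HVk | HVk].
      + apply IHk; auto; lia.
      + destruct (Rle_lt_dec (p k) U) as [HkU | HkU].
        * apply (piece_calib (p k) (p (S k))); auto; lra.
        * destruct (IHk ltac:(lia) U (p k)) as [E1 B1]; try lra.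
          destruct (piece_calib (p k) (p (S k)) Hpk Hinc Hpk1 C1x C1y C1z (p k) V) as [E2 B2]; try lra.
          split. apply (ex_RInt_Chasles _ U (p k) V); auto.
          rewrite <- (RInt_Chasles _ U (p k) V E1 E2). change plus with Rplus. lra. }
  intros U V H0U HUV HV1. apply (Q n); auto. rewrite Pn; auto.
Qed.

End Calib.

Lemma lin_le e1 e2 X Y : e1 ^ 2 + e2 ^ 2 <= 1 -> e1 * X + e2 * Y <= sqrt (X ^ 2 + Y ^ 2).
Proof.
  intro He. destruct (Rle_lt_dec (e1 * X + e2 * Y) 0). generalize (sqrt_pos (X^2+Y^2)); lra.
  rewrite <- (sqrt_square (e1 * X + e2 * Y)) by lra. apply sqrt_le_1_alt.
  pose proof (pow2_ge_0 (e1 * Y - e2 * X)). pose proof (pow2_ge_0 X). pose proof (pow2_ge_0 Y).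
  assert ((e1 * X + e2 * Y) * (e1 * X + e2 * Y) <= (e1^2 + e2^2) * (X^2 + Y^2)) by nra.
  nra.
Qed.

Lemma speed_ge_xy X Y Z c : sqrt (X ^ 2 + Y ^ 2) <= sqrt (X ^ 2 + Y ^ 2 + c ^ 2 * Z ^ 2).
Proof. apply sqrt_le_1_alt. pose proof (pow2_ge_0 c); pose proof (pow2_ge_0 Z); nra. Qed.

Lemma horiz_gen a cx cy cz e1 e2 : pw_smooth cx cy cz -> e1 ^ 2 + e2 ^ 2 <= 1 ->
  forall U V, 0 <= U -> U <= V -> V <= 1 ->
  ex_RInt (speedf a cx cy cz) U V /\
  (e1 * cx V + e2 * cy V) - (e1 * cx U + e2 * cy U) <= RInt (speedf a cx cy cz) U V.
Proof.
  intros Hpw He.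
  apply (calib a cx cy cz (fun x y z => e1 * x + e2 * y) (fun _ _ _ => True)); auto.
  intros gx gy gz [Dx _] [Dy _] _ u _.
  assert (Hd : is_derive (fun v => e1 * gx v + e2 * gy v) u (e1 * Derive gx u + e2 * Derive gy u)).
  { auto_derive. repeat split; auto. rewrite !Rmult_1_l; reflexivity. }
  cbv beta. split. eexists; exact Hd.
  replace (Derive (fun v : R => e1 * gx v + e2 * gy v) u) with (e1 * Derive gx u + e2 * Derive gy u)
    by (symmetry; apply is_derive_unique; exact Hd).
    unfold speedf, h_speed2. eapply Rle_trans. apply lin_le; eauto. apply speed_ge_xy; auto.
Qed.

Lemma horiz a cx cy cz : pw_smooth cx cy cz ->
  forall U V, 0 <= U -> U <= V -> V <= 1 ->
  ex_RInt (speedf a cx cy cz) U V /\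
  sqrt ((cx V - cx U) ^ 2 + (cy V - cy U) ^ 2) <= RInt (speedf a cx cy cz) U V.
Proof.
  intros Hpw U V H1 H2 H3.
  set (D := sqrt ((cx V - cx U) ^ 2 + (cy V - cy U) ^ 2)).
  assert (HD0 : 0 <= (cx V - cx U) ^ 2 + (cy V - cy U) ^ 2)
    by (pose proof (pow2_ge_0 (cx V - cx U)); pose proof (pow2_ge_0 (cy V - cy U)); lra).
  destruct (Req_dec D 0) as [HD | HD].
  - destruct (horiz_gen a cx cy cz 0 0 Hpw ltac:(simpl; lra) U V) as [E B]; auto.
    split; auto. rewrite HD. lra.
  - assert (Dpos : 0 < D) by (generalize (sqrt_pos ((cx V - cx U) ^ 2 + (cy V - cy U) ^ 2)); fold D; lra).
    assert (DD : D * D = (cx V - cx U) ^ 2 + (cy V - cy U) ^ 2) by (apply sqrt_sqrt; auto).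
    clearbody D.
    assert (HX : (cx V - cx U) ^ 2 + (cy V - cy U) ^ 2 <> 0).
    { rewrite <- DD. apply Rgt_not_eq. apply Rmult_lt_0_compat; lra. }
    destruct (horiz_gen a cx cy cz ((cx V - cx U) / D) ((cy V - cy U) / D) Hpw) with U V as [E B]; auto.
    + replace (((cx V - cx U) / D) ^ 2 + ((cy V - cy U) / D) ^ 2) with
        (((cx V - cx U) ^ 2 + (cy V - cy U) ^ 2) / (D * D)) by (field; lra).
      right. rewrite <- DD. field. lra.
    + split; auto. eapply Rle_trans; [| exact B]. right.
      apply (Rmult_eq_reg_r D); [| lra].
      replace ((cx V - cx U) / D * cx V + (cy V - cy U) / D * cy V -
        ((cx V - cx U) / D * cx U + (cy V - cy U) / D * cy U)) with
        (((cx V - cx U) ^ 2 + (cy V - cy U) ^ 2) / D) by (field; lra).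
      rewrite <- DD. field. lra.
Qed.

Lemma cos_dD_half x y : 1 / 2 < cos (distDelta aa x y).
Proof.
  eapply Rlt_le_trans; [| apply cos_dD_ge]. rewrite cos_PI4.
  assert (0 < sqrt 2) by (apply sqrt_lt_R0; lra).
  assert (sqrt 2 * sqrt 2 = 2) by (apply sqrt_sqrt; lra).
  assert (sqrt 2 < 2) by nra.
  apply (Rmult_lt_reg_r (sqrt 2)); auto. field_simplify; lra.
Qed.

Lemma vert_gen cx cy cz c : pw_smooth cx cy cz -> Rabs c <= 1 / 2 ->
  forall U V, 0 <= U -> U <= V -> V <= 1 ->
  ex_RInt (speedf aa cx cy cz) U V /\
  c * cz V - c * cz U <= RInt (speedf aa cx cy cz) U V.
Proof.
  intros Hpw Hc.
  apply (calib aa cx cy cz (fun x y z => c * z) (fun _ _ _ => True)); auto.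
  intros gx gy gz _ _ [Dz _] u _.
  assert (Hd : is_derive (fun v => c * gz v) u (c * Derive gz u)).
  { auto_derive. auto. rewrite !Rmult_1_l; reflexivity. }
  cbv beta. split. eexists; exact Hd.
  replace (Derive (fun v : R => c * gz v) u) with (c * Derive gz u)
    by (symmetry; apply is_derive_unique; exact Hd). unfold speedf, h_speed2.
    set (Z := Derive gz u). set (k := cos (distDelta aa (gx u) (gy u))).
    assert (Hk : 1/2 < k) by apply cos_dD_half.
    apply Rle_trans with (sqrt (k ^ 2 * Z ^ 2)).
    + replace (k ^ 2 * Z ^ 2) with (Rsqr (k * Z)) by (unfold Rsqr; ring).
      rewrite sqrt_Rsqr_abs. rewrite Rabs_mult, (Rabs_right k) by lra.
      apply Rle_trans with (Rabs c * Rabs Z). rewrite <- Rabs_mult. apply Rle_abs.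
      apply Rmult_le_compat_r. apply Rabs_pos. lra.
    + apply sqrt_le_1_alt. pose proof (pow2_ge_0 (Derive gx u)). pose proof (pow2_ge_0 (Derive gy u)). lra.
Qed.

Definition Cf (q : R) : R := if Rle_dec q 0 then 1 - q / 2 else cos (sqrt q).
Definition Sf (q : R) : R := if Rle_dec q 0 then 1 - q / 6 else sin (sqrt q) / sqrt q.
Definition dC (q : R) : R := - Sf q / 2.
Definition dS (q : R) : R := if Rle_dec q 0 then - 1 / 6 else (Cf q - Sf q) / (2 * q).

Lemma approx_vals a : cos_approx a 1 = 1 - a^2/2 /\ cos_approx a 2 = 1 - a^2/2 + a^4/24 /\
  sin_approx a 1 = a - a^3/6 /\ sin_approx a 2 = a - a^3/6 + a^5/120.
Proof. unfold cos_approx, sin_approx, cos_term, sin_term. simpl. repeat split; field. Qed.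

Lemma deriv_at0 (f : R -> R) l K : 0 <= K ->
  (forall h, Rabs h <= 1 -> Rabs (f h - f 0 - l * h) <= K * h ^ 2) -> is_derive f 0 l.
Proof.
  intros HK H. apply is_derive_Reals. intros eps Heps.
  assert (Hd : 0 < Rmin 1 (eps / (K + 1))).
  { apply Rmin_pos. lra. apply Rdiv_lt_0_compat; lra. }
  exists (mkposreal _ Hd). intros h Hh0 Hh. simpl in Hh.
  generalize (Rmin_l 1 (eps / (K + 1))) (Rmin_r 1 (eps / (K + 1))); intros.
  rewrite Rplus_0_l. specialize (H h ltac:(lra)).
  assert (Hah : 0 < Rabs h) by (apply Rabs_pos_lt; auto).
  replace ((f h - f 0) / h - l) with ((f h - f 0 - l * h) / h) by (field; auto).
  unfold Rdiv. rewrite Rabs_mult, Rabs_inv.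
  apply (Rmult_lt_reg_r (Rabs h)); auto. rewrite Rmult_assoc, Rinv_l by lra. rewrite Rmult_1_r.
  eapply Rle_lt_trans. exact H.
  replace (h ^ 2) with (Rabs h * Rabs h) by (rewrite <- Rabs_mult; rewrite Rabs_right; [ring | nra]).
  assert (K * Rabs h <= K * (eps / (K+1))) by (apply Rmult_le_compat_l; lra).
  assert (K * (eps / (K + 1)) < eps).
  { apply (Rmult_lt_reg_r (K + 1)). lra. field_simplify; lra. }
  nra.
Qed.

Lemma sqrt_pos_sq q : 0 < q -> 0 < sqrt q /\ sqrt q * sqrt q = q.
Proof. intros. split. apply sqrt_lt_R0; auto. apply sqrt_sqrt; lra. Qed.

Lemma Cf_pos q : 0 < q -> Cf q = cos (sqrt q).
Proof. intros. unfold Cf. destruct (Rle_dec q 0); [lra | auto]. Qed.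
Lemma Sf_pos q : 0 < q -> Sf q = sin (sqrt q) / sqrt q.
Proof. intros. unfold Sf. destruct (Rle_dec q 0); [lra | auto]. Qed.
Lemma dS_pos q : 0 < q -> dS q = (Cf q - Sf q) / (2 * q).
Proof. intros. unfold dS. destruct (Rle_dec q 0); [lra | auto]. Qed.
Lemma Cf0 : Cf 0 = 1. Proof. unfold Cf. destruct (Rle_dec 0 0); lra. Qed.
Lemma Sf0 : Sf 0 = 1. Proof. unfold Sf. destruct (Rle_dec 0 0); lra. Qed.
Lemma dS0 : dS 0 = - 1 / 6. Proof. unfold dS. destruct (Rle_dec 0 0); lra. Qed.

Lemma loc_pos (f g : R -> R) q : 0 < q -> (forall x, 0 < x -> f x = g x) -> locally q (fun x => g x = f x).
Proof.
  intros Hq H. exists (mkposreal _ Hq). intros y Hy. change (Rabs (y - q) < q) in Hy.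
  apply Rabs_def2 in Hy. symmetry. apply H. lra.
Qed.

Lemma Cf_deriv q : 0 <= q -> is_derive Cf q (dC q).
Proof.
  intro Hq. destruct (Req_dec q 0) as [-> | Hq0].
  - unfold dC. rewrite Sf0. apply (deriv_at0 _ _ (1/24)). lra.
    intros h Hh. rewrite Cf0. unfold Cf. destruct (Rle_dec h 0).
    + match goal with |- Rabs ?e <= _ => replace e with 0 by field end. rewrite Rabs_R0.
      pose proof (pow2_ge_0 h). lra.
    + destruct (sqrt_pos_sq h ltac:(lra)) as [Hr Hrr].
      assert (sqrt h <= 1).
      { apply Rabs_le_between in Hh. rewrite <- sqrt_1. apply sqrt_le_1_alt. lra. }
      destruct (cos_bound (sqrt h) 0) as [B1 B2]. generalize PI2_1; lra. generalize PI2_1; lra.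
      simpl in B1, B2. destruct (approx_vals (sqrt h)) as [A1 [A2 _]]. rewrite A1 in B1. rewrite A2 in B2.
      replace (sqrt h ^ 2) with h in * by (simpl; nra).
      replace (sqrt h ^ 4) with (h ^ 2) in * by (simpl; nra).
      rewrite Rabs_right; lra.
  - assert (Hq' : 0 < q) by lra.
    destruct (sqrt_pos_sq q Hq') as [Hr Hrr].
    apply (is_derive_ext_loc (fun x => cos (sqrt x))). apply loc_pos; auto. intros; rewrite Cf_pos; auto.
    unfold dC. rewrite Sf_pos by auto.
    auto_derive. lra. field. lra.
Qed.

Lemma Sf_deriv q : 0 <= q -> is_derive Sf q (dS q).
Proof.
  intro Hq. destruct (Req_dec q 0) as [-> | Hq0].
  - rewrite dS0. apply (deriv_at0 _ _ (1/120)). lra.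
    intros h Hh. rewrite Sf0. unfold Sf. destruct (Rle_dec h 0).
    + match goal with |- Rabs ?e <= _ => replace e with 0 by field end. rewrite Rabs_R0.
      pose proof (pow2_ge_0 h). lra.
    + destruct (sqrt_pos_sq h ltac:(lra)) as [Hr Hrr].
      assert (sqrt h <= 1).
      { apply Rabs_le_between in Hh. rewrite <- sqrt_1. apply sqrt_le_1_alt. lra. }
      destruct (sin_bound (sqrt h) 0) as [B1 B2]. lra. generalize PI2_1; lra.
      simpl in B1, B2. destruct (approx_vals (sqrt h)) as [_ [_ [A3 A4]]]. rewrite A3 in B1. rewrite A4 in B2.
      set (r := sqrt h) in *. clearbody r.
      replace (sin r / r - 1 - - 1 / 6 * h) with ((sin r - (r - r^3/6)) / r).
      2:{ rewrite <- Hrr. field. lra. }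
      rewrite Rabs_right.
      2:{ apply Rle_ge. apply Rmult_le_pos. lra. left; apply Rinv_0_lt_compat; lra. }
      apply (Rmult_le_reg_r r). lra. unfold Rdiv. rewrite Rmult_assoc, Rinv_l by lra.
      rewrite <- Hrr. nra.
  - assert (Hq' : 0 < q) by lra.
    destruct (sqrt_pos_sq q Hq') as [Hr Hrr].
    apply (is_derive_ext_loc (fun x => sin (sqrt x) / sqrt x)). apply loc_pos; auto. intros; rewrite Sf_pos; auto.
    rewrite dS_pos, Cf_pos, Sf_pos by auto.
    auto_derive. repeat split; lra. set (r := sqrt q) in *. clearbody r. rewrite <- Hrr. field. lra.
Qed.

Lemma sc1 r : sin r ^ 2 + cos r ^ 2 = 1.
Proof. generalize (sin2_cos2 r). unfold Rsqr. simpl. nra. Qed.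

Lemma CS_unit q : 0 <= q -> Cf q ^ 2 + q * Sf q ^ 2 = 1.
Proof.
  intro Hq. destruct (Req_dec q 0) as [-> | Hq0]. rewrite Cf0, Sf0. ring.
  destruct (sqrt_pos_sq q ltac:(lra)) as [Hr Hrr].
  rewrite Cf_pos, Sf_pos by lra. set (r := sqrt q) in *. clearbody r. rewrite <- Hrr.
  generalize (sc1 r). intro. field_simplify; [| lra]. nra.
Qed.

Lemma CS_orth q : 0 <= q -> Cf q * dC q + Sf q ^ 2 / 2 + q * Sf q * dS q = 0.
Proof.
  intro Hq. destruct (Req_dec q 0) as [-> | Hq0]. unfold dC. rewrite Cf0, Sf0. field.
  destruct (sqrt_pos_sq q ltac:(lra)) as [Hr Hrr]. unfold dC.
  rewrite dS_pos, Cf_pos, Sf_pos by lra. set (r := sqrt q) in *. clearbody r. rewrite <- Hrr.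
  field. lra.
Qed.

Lemma CS_K q : 0 <= q -> 4 * q * (dC q ^ 2 + q * dS q ^ 2 + Sf q * dS q) + Sf q ^ 2 = 1.
Proof.
  intro Hq. destruct (Req_dec q 0) as [-> | Hq0]. rewrite Sf0. ring.
  destruct (sqrt_pos_sq q ltac:(lra)) as [Hr Hrr]. unfold dC.
  rewrite dS_pos, Cf_pos, Sf_pos by lra. set (r := sqrt q) in *. clearbody r. rewrite <- Hrr.
  generalize (sc1 r). intro. field_simplify; [| lra].
  replace (32 * r ^ 2 * sin r ^ 2 + 32 * r ^ 2 * cos r ^ 2) with (32 * r ^ 2 * (sin r ^ 2 + cos r ^ 2)) by ring.
  rewrite H. field. lra.
Qed.

Lemma Sf_sq_le q : 0 <= q -> Sf q ^ 2 <= 1.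
Proof.
  intro Hq. destruct (Req_dec q 0) as [-> | Hq0]. rewrite Sf0. lra.
  destruct (sqrt_pos_sq q ltac:(lra)) as [Hr Hrr].
  rewrite Sf_pos by lra. set (r := sqrt q) in *. clearbody r.
  assert (Hs : Rabs (sin r) <= r).
  { apply Rabs_le. split.
    - destruct (Rle_lt_dec r PI). assert (0 <= sin r) by (apply sin_ge_0; lra). lra.
      generalize (SIN_bound r) PI_RGT_0. intros [? ?] ?. generalize PI2_1. lra.
    - left; apply sin_lt_x; auto. }
  replace ((sin r / r) ^ 2) with ((Rabs (sin r) / r) ^ 2).
  2:{ unfold Rdiv. rewrite !Rpow_mult_distr. f_equal. rewrite <- Rsqr_pow2, <- Rsqr_pow2. symmetry. apply Rsqr_abs. }
  assert (0 <= Rabs (sin r) / r <= 1).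
  { split. apply Rmult_le_pos. apply Rabs_pos. left; apply Rinv_0_lt_compat; auto.
    apply (Rmult_le_reg_r r); auto. unfold Rdiv. rewrite Rmult_assoc, Rinv_l by lra. lra. }
  nra.
Qed.

Lemma Cf_sq_le q d : 0 <= q -> sqrt q <= 3 * PI / 4 -> 0 <= d -> d <= sqrt q -> d <= PI / 4 ->
  Cf q ^ 2 <= cos d ^ 2.
Proof.
  intros Hq Hr Hd Hdr HdP. destruct (Req_dec q 0) as [-> | Hq0].
  - rewrite sqrt_0 in Hdr. assert (d = 0) by lra. subst. rewrite Cf0, cos_0. lra.
  - destruct (sqrt_pos_sq q ltac:(lra)) as [Hr0 Hrr].
    rewrite Cf_pos by lra. set (r := sqrt q) in *. clearbody r.
    generalize PI_RGT_0; intro HP.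
    assert (Hcd : 0 <= cos d) by (apply cos_ge_0; lra).
    destruct (Rle_lt_dec r (PI / 2)).
    + assert (0 <= cos r) by (apply cos_ge_0; lra).
      assert (cos r <= cos d) by (apply cos_le_mono; lra). nra.
    + replace (cos r) with (- cos (PI - r)) by (rewrite cos_minus, cos_PI, sin_PI; ring).
      assert (0 <= cos (PI - r)) by (apply cos_ge_0; lra).
      assert (cos (PI - r) <= cos d) by (apply cos_le_mono; lra). nra.
Qed.

Lemma CS4 a1 a2 a3 a4 b1 b2 b3 b4 :
  (a1*b1 + a2*b2 + a3*b3 + a4*b4) ^ 2 <= (a1^2+a2^2+a3^2+a4^2) * (b1^2+b2^2+b3^2+b4^2).
Proof.
  assert (E : (a1^2+a2^2+a3^2+a4^2) * (b1^2+b2^2+b3^2+b4^2) - (a1*b1 + a2*b2 + a3*b3 + a4*b4) ^ 2 =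
    (a1*b2-a2*b1)^2 + (a1*b3-a3*b1)^2 + (a1*b4-a4*b1)^2 + (a2*b3-a3*b2)^2 + (a2*b4-a4*b2)^2 + (a3*b4-a4*b3)^2) by ring.
  pose proof (pow2_ge_0 (a1*b2-a2*b1)). pose proof (pow2_ge_0 (a1*b3-a3*b1)).
  pose proof (pow2_ge_0 (a1*b4-a4*b1)). pose proof (pow2_ge_0 (a2*b3-a3*b2)).
  pose proof (pow2_ge_0 (a2*b4-a4*b2)). pose proof (pow2_ge_0 (a3*b4-a4*b3)). lra.
Qed.

Lemma alg_core C S dCv dSv q X Y X' Y' Z' co si k E1 E2 E3 E4 :
  co ^ 2 + si ^ 2 = 1 -> q = X ^ 2 + Y ^ 2 -> C ^ 2 + q * S ^ 2 = 1 ->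
  C * dCv + S ^ 2 / 2 + q * S * dSv = 0 ->
  4 * q * (dCv ^ 2 + q * dSv ^ 2 + S * dSv) + S ^ 2 = 1 -> S ^ 2 <= 1 -> C ^ 2 <= k ^ 2 ->
  E1 ^ 2 + E2 ^ 2 + E3 ^ 2 + E4 ^ 2 = 1 ->
  let q' := 2 * X * X' + 2 * Y * Y' in
  let s1 := C * co in let s2 := C * si in let s3 := S * X in let s4 := S * Y in
  let t1 := dCv * q' * co - C * si * Z' in let t2 := dCv * q' * si + C * co * Z' in
  let t3 := dSv * q' * X + S * X' in let t4 := dSv * q' * Y + S * Y' in
  let b := E1 * s1 + E2 * s2 + E3 * s3 + E4 * s4 in
  let b' := E1 * t1 + E2 * t2 + E3 * t3 + E4 * t4 in
  b ^ 2 <= 1 /\ b' ^ 2 <= (1 - b ^ 2) * (X' ^ 2 + Y' ^ 2 + k ^ 2 * Z' ^ 2).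
Proof.
  intros Hcs Hq Hu Ho HK HS HC HE q' s1 s2 s3 s4 t1 t2 t3 t4 b b'.
  assert (Hs : s1^2 + s2^2 + s3^2 + s4^2 = 1).
  { unfold s1, s2, s3, s4.
    transitivity (C^2*(co^2+si^2) + S^2*(X^2+Y^2)); [ring|]. rewrite Hcs, <- Hq.
    replace (C^2*1 + S^2*q) with (C^2 + q*S^2) by ring; exact Hu. }
  assert (Hst : s1 * t1 + s2 * t2 + s3 * t3 + s4 * t4 = 0).
  { unfold s1, s2, s3, s4, t1, t2, t3, t4.
    transitivity (q' * (C * dCv * (co^2 + si^2) + S * dSv * (X^2+Y^2)) + S^2 * (X * X' + Y * Y')).
    ring. rewrite Hcs, <- Hq. unfold q'.
    transitivity ((2 * X * X' + 2 * Y * Y') * (C * dCv + S ^ 2 / 2 + q * S * dSv)). field.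
    rewrite Ho. ring. }
  set (K := dCv ^ 2 + q * dSv ^ 2 + S * dSv) in *.
  assert (Ht : t1^2 + t2^2 + t3^2 + t4^2 = q'^2 * K + C^2 * Z'^2 + S^2 * (X'^2 + Y'^2)).
  { unfold t1, t2, t3, t4, K.
    transitivity ((dCv^2 * q'^2 + C^2 * Z'^2) * (co^2 + si^2) + dSv^2 * q'^2 * (X^2+Y^2)
      + dSv * q' * S * (2 * X * X' + 2 * Y * Y') + S^2 * (X'^2 + Y'^2)). ring.
    rewrite Hcs, <- Hq. fold q'. ring. }
  assert (Hq'2 : q' ^ 2 <= 4 * q * (X' ^ 2 + Y' ^ 2)).
  { unfold q'. rewrite Hq. pose proof (pow2_ge_0 (X * Y' - Y * X')). nra. }
  assert (Hq0 : 0 <= q) by (rewrite Hq; pose proof (pow2_ge_0 X); pose proof (pow2_ge_0 Y); lra).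
  assert (HXY : 0 <= X' ^ 2 + Y' ^ 2) by (pose proof (pow2_ge_0 X'); pose proof (pow2_ge_0 Y'); lra).
  assert (Hb : q' ^ 2 * K + S ^ 2 * (X' ^ 2 + Y' ^ 2) <= X' ^ 2 + Y' ^ 2).
  { destruct (Req_dec q 0) as [Hz | Hz].
    - assert (q' ^ 2 = 0). { rewrite Hz in Hq'2. pose proof (pow2_ge_0 q'). lra. }
      rewrite H. rewrite Hz in HK. nra.
    - assert (HK0 : 0 <= K).
      { assert (0 <= 4 * q * K) by lra. apply (Rmult_le_reg_l (4 * q)). lra. lra. }
      assert (q' ^ 2 * K <= 4 * q * (X' ^ 2 + Y' ^ 2) * K) by (apply Rmult_le_compat_r; auto).
      nra. }
  assert (Htt : t1^2 + t2^2 + t3^2 + t4^2 <= X' ^ 2 + Y' ^ 2 + k ^ 2 * Z' ^ 2).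
  { rewrite Ht. pose proof (pow2_ge_0 Z'). nra. }
  assert (Hbb : b ^ 2 <= 1).
  { pose proof (CS4 E1 E2 E3 E4 s1 s2 s3 s4). rewrite HE, Hs in H. unfold b. lra. }
  split; auto.
  assert (Hb' : b' = (E1 - b * s1) * t1 + (E2 - b * s2) * t2 + (E3 - b * s3) * t3 + (E4 - b * s4) * t4).
  { unfold b'. transitivity (E1 * t1 + E2 * t2 + E3 * t3 + E4 * t4 - b * (s1 * t1 + s2 * t2 + s3 * t3 + s4 * t4)).
    rewrite Hst; ring. ring. }
  pose proof (CS4 (E1 - b * s1) (E2 - b * s2) (E3 - b * s3) (E4 - b * s4) t1 t2 t3 t4) as HC4.
  rewrite <- Hb' in HC4.
  assert (Hn : (E1 - b * s1)^2 + (E2 - b * s2)^2 + (E3 - b * s3)^2 + (E4 - b * s4)^2 = 1 - b ^ 2).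
  { transitivity ((E1^2+E2^2+E3^2+E4^2) - 2 * b * (E1 * s1 + E2 * s2 + E3 * s3 + E4 * s4)
      + b^2 * (s1^2 + s2^2 + s3^2 + s4^2)). ring. rewrite HE, Hs. fold b. ring. }
  rewrite Hn in HC4.
  assert (0 <= 1 - b ^ 2) by lra.
  eapply Rle_trans. apply HC4. apply Rmult_le_compat_l; auto.
Qed.

Lemma asin_deriv x : -1 < x < 1 -> is_derive asin x (1 / sqrt (1 - x ^ 2)).
Proof.
  intro H. apply is_derive_Reals.
  pose proof (derive_pt_asin x H) as D.
  destruct (derivable_pt_asin x H) as [l Hl] eqn:E. unfold derive_pt in D. simpl in D.
  replace (x ^ 2) with (Rsqr x) by (unfold Rsqr; ring). rewrite <- D. exact Hl.
Qed.

Lemma final_ineq m b b' T : 1 < m -> b ^ 2 <= 1 -> 0 <= T -> b' ^ 2 <= (1 - b ^ 2) * T ->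
  b' / m * (1 / sqrt (1 - (b / m) ^ 2)) <= sqrt T.
Proof.
  intros Hm Hb HT Hb'.
  assert (Hw2 : 0 < 1 - (b / m) ^ 2).
  { replace ((b/m)^2) with (b^2/(m^2)) by (field; lra).
    assert (b^2 < m^2) by nra. apply (Rmult_lt_reg_r (m^2)). nra.
    field_simplify; nra. }
  set (w := sqrt (1 - (b / m) ^ 2)).
  assert (Hw : 0 < w) by (apply sqrt_lt_R0; auto).
  assert (Hww : w * w = 1 - (b / m) ^ 2) by (apply sqrt_sqrt; lra).
  destruct (Rle_lt_dec b' 0).
  - assert (b' / m * (1 / w) <= 0).
    { replace (b' / m * (1 / w)) with (b' * (/ m * / w)) by (field; lra).
      apply Rmult_le_0_r; auto. left. apply Rmult_lt_0_compat; apply Rinv_0_lt_compat; lra. }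
    generalize (sqrt_pos T); lra.
  - replace (b' / m * (1 / w)) with (b' / (m * w)) by (field; lra).
    apply (Rmult_le_reg_r (m * w)). nra. unfold Rdiv. rewrite Rmult_assoc, Rinv_l by nra. rewrite Rmult_1_r.
    assert (HsT : sqrt T * sqrt T = T) by (apply sqrt_sqrt; auto).
    assert (0 <= sqrt T) by apply sqrt_pos.
    assert (b' * b' <= (m * w * sqrt T) * (m * w * sqrt T)).
    { replace ((m * w * sqrt T) * (m * w * sqrt T)) with (m ^ 2 * (w * w) * (sqrt T * sqrt T)) by ring.
      rewrite Hww, HsT. replace (m ^ 2 * (1 - (b / m) ^ 2)) with (m^2 - b^2) by (field; lra).
      assert ((1 - b^2) * T <= (m^2 - b^2) * T) by (apply Rmult_le_compat_r; nra). nra. }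
    assert (0 <= m * w * sqrt T) by (apply Rmult_le_pos; nra).
    nra.
Qed.

Section Sphere.
Variables c1 c2 E1 E2 E3 E4 m : R.

Definition qf x y := (x - c1) ^ 2 + (y - c2) ^ 2.
Definition betaf x y z := E1 * (Cf (qf x y) * cos z) + E2 * (Cf (qf x y) * sin z)
  + E3 * (Sf (qf x y) * (x - c1)) + E4 * (Sf (qf x y) * (y - c2)).
Definition PhiS x y z := asin (betaf x y z / m).

Hypothesis Hm : 1 < m.
Hypothesis HE : E1 ^ 2 + E2 ^ 2 + E3 ^ 2 + E4 ^ 2 = 1.
Hypothesis Hd : forall x y, distDelta aa x y <= sqrt (qf x y).

Lemma PhiS_ok gx gy gz : C1 gx -> C1 gy -> C1 gz -> forall u,
  qf (gx u) (gy u) <= (3 * PI / 4) ^ 2 ->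
  ex_derive (fun v => PhiS (gx v) (gy v) (gz v)) u /\
  Derive (fun v => PhiS (gx v) (gy v) (gz v)) u <= speedf aa gx gy gz u.
Proof.
  intros [Dx _] [Dy _] [Dz _] u Hu.
  set (X := gx u - c1). set (Y := gy u - c2). set (Z := gz u).
  set (X' := Derive gx u). set (Y' := Derive gy u). set (Z' := Derive gz u).
  set (q0 := qf (gx u) (gy u)).
  assert (Hq0 : q0 = X ^ 2 + Y ^ 2) by reflexivity.
  assert (Hq0p : 0 <= q0) by (rewrite Hq0; pose proof (pow2_ge_0 X); pose proof (pow2_ge_0 Y); lra).
  set (q' := 2 * X * X' + 2 * Y * Y').
  set (b := betaf (gx u) (gy u) (gz u)).
  set (b' := E1 * (dC q0 * q' * cos Z - Cf q0 * sin Z * Z') + E2 * (dC q0 * q' * sin Z + Cf q0 * cos Z * Z')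
     + E3 * (dS q0 * q' * X + Sf q0 * X') + E4 * (dS q0 * q' * Y + Sf q0 * Y')).
  assert (HB : is_derive (fun v => betaf (gx v) (gy v) (gz v)) u b').
  { unfold betaf, qf. auto_derive.
    - repeat split; first [exact (ex_intro _ _ (Cf_deriv q0 Hq0p)) | exact (ex_intro _ _ (Sf_deriv q0 Hq0p)) | auto].
    - change ((gx u + - c1) * ((gx u + - c1) * 1) + (gy u + - c2) * ((gy u + - c2) * 1)) with q0.
      change (Derive (fun x => Cf x)) with (Derive Cf). change (Derive (fun x => Sf x)) with (Derive Sf).
      change (Derive (fun x => gx x) u) with X'. change (Derive (fun x => gy x) u) with Y'.
      change (Derive (fun x => gz x) u) with Z'.
      rewrite (is_derive_unique _ _ _ (Cf_deriv q0 Hq0p)).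
      rewrite (is_derive_unique _ _ _ (Sf_deriv q0 Hq0p)).
      unfold b', q', X, Y, Z, X', Y', Z'. ring. }
  set (d := distDelta aa (gx u) (gy u)).
  assert (Hsq : sqrt q0 <= 3 * PI / 4).
  { generalize PI_RGT_0; intro. rewrite <- (sqrt_pow2 (3 * PI / 4)) by lra.
    apply sqrt_le_1_alt. exact Hu. }
  assert (Hcore := alg_core (Cf q0) (Sf q0) (dC q0) (dS q0) q0 X Y X' Y' Z' (cos Z) (sin Z) (cos d)
    E1 E2 E3 E4).
  destruct Hcore as [Hbb Hbb'].
  + generalize (sc1 Z); lra.
  + exact Hq0.
  + apply CS_unit; auto.
  + apply CS_orth; auto.
  + apply CS_K; auto.
  + apply Sf_sq_le; auto.
  + apply Cf_sq_le; auto. apply dD_pos. apply Hd. apply dD_le_PI4.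
  + exact HE.
  + change (E1 * (Cf q0 * cos Z) + E2 * (Cf q0 * sin Z) + E3 * (Sf q0 * X) + E4 * (Sf q0 * Y)) with b in Hbb, Hbb'.
    change (E1 * (dC q0 * q' * cos Z - Cf q0 * sin Z * Z') + E2 * (dC q0 * q' * sin Z + Cf q0 * cos Z * Z')
     + E3 * (dS q0 * q' * X + Sf q0 * X') + E4 * (dS q0 * q' * Y + Sf q0 * Y')) with b' in Hbb'.
    assert (HB2 : is_derive (fun v => betaf (gx v) (gy v) (gz v) / m) u (b' / m)).
    { replace (b' / m) with (/ m * b') by (unfold Rdiv; ring).
      apply (is_derive_ext (fun v => (/ m) * betaf (gx v) (gy v) (gz v))).
      intro t; unfold Rdiv; rewrite Rmult_comm; reflexivity. exact (is_derive_scal _ _ _ _ HB). }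
    assert (Hbm : -1 < b / m < 1).
    { assert (Hb2 : (b / m) ^ 2 < 1).
      { replace ((b/m)^2) with (b^2/(m^2)) by (field; lra). apply (Rmult_lt_reg_r (m^2)). nra.
        field_simplify; nra. }
      split; nra. }
    assert (HP : is_derive (fun v => PhiS (gx v) (gy v) (gz v)) u (b' / m * (1 / sqrt (1 - (b / m) ^ 2)))).
    { unfold PhiS. apply (is_derive_comp asin (fun v => betaf (gx v) (gy v) (gz v) / m)).
      apply asin_deriv. exact Hbm. exact HB2. }
    split. eexists; exact HP.
    replace (Derive (fun v : R => PhiS (gx v) (gy v) (gz v)) u) with (b' / m * (1 / sqrt (1 - (b / m) ^ 2)))
      by (symmetry; apply is_derive_unique; exact HP).
    unfold speedf, h_speed2. fold X' Y' Z' d.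
    apply final_ineq; auto.
    pose proof (pow2_ge_0 X'); pose proof (pow2_ge_0 Y'); pose proof (pow2_ge_0 Z'); pose proof (pow2_ge_0 (cos d)).
    nra.
Qed.
End Sphere.

Lemma sqrt_lt_PI2 q : q < PI ^ 2 / 8 -> sqrt q < PI / 2.
Proof.
  intro H. generalize PI_RGT_0; intro.
  destruct (Rle_lt_dec q 0). rewrite sqrt_neg_0 by lra. lra.
  rewrite <- (sqrt_pow2 (PI / 2)) by lra. apply sqrt_lt_1_alt. split. lra.
  replace ((PI/2)^2) with (PI^2/4) by field. nra.
Qed.

Lemma odd_case cx cy cz c1 c2 (I J : Z) :
  pw_smooth cx cy cz -> c1 = 2 * aa * IZR I -> c2 = 2 * aa * IZR J ->
  (cx 1 - c1) ^ 2 + (cy 1 - c2) ^ 2 = (cx 0 - c1) ^ 2 + (cy 0 - c2) ^ 2 ->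
  (cx 0 - c1) * (cx 1 - c1) + (cy 0 - c2) * (cy 1 - c2) = 0 ->
  cos (cz 1 - cz 0) = 0 ->
  PI / 2 <= RInt (speedf aa cx cy cz) 0 1.
Proof.
  intros Hpw Hc1 Hc2 Hq Horth Hz.
  generalize PI_RGT_0; intro HPI.
  set (L := RInt (speedf aa cx cy cz) 0 1).
  set (X0 := cx 0 - c1). set (Y0 := cy 0 - c2). set (X1 := cx 1 - c1). set (Y1 := cy 1 - c2).
  set (q0 := X0 ^ 2 + Y0 ^ 2).
  assert (Hq0 : 0 <= q0) by (unfold q0; pose proof (pow2_ge_0 X0); pose proof (pow2_ge_0 Y0); lra).
  destruct (Rle_lt_dec (PI ^ 2 / 8) q0) as [Hbig | Hsmall].
  - (* far start: horizontal displacement *)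
    destruct (horiz aa cx cy cz Hpw 0 1) as [_ B]; try lra. fold L in B.
    eapply Rle_trans; [| exact B].
    assert (E : (cx 1 - cx 0) ^ 2 + (cy 1 - cy 0) ^ 2 = 2 * q0).
    { replace (cx 1 - cx 0) with (X1 - X0) by (unfold X1, X0; ring).
      replace (cy 1 - cy 0) with (Y1 - Y0) by (unfold Y1, Y0; ring).
      unfold q0. fold X1 Y1 X0 Y0 in Hq, Horth.
      transitivity ((X1^2+Y1^2) + (X0^2+Y0^2) - 2 * (X0 * X1 + Y0 * Y1)). ring.
      rewrite Hq, Horth. ring. }
    rewrite E. rewrite <- (sqrt_pow2 (PI / 2)) by lra. apply sqrt_le_1_alt.
    replace ((PI/2)^2) with (PI^2/4) by field. lra.
  - destruct (Rle_lt_dec (PI / 2) L) as [Hok | HL]; [exact Hok | exfalso].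
    destruct (Classical_Prop.classic (exists T, 0 <= T <= 1 /\
        (3 * PI / 4) ^ 2 < (cx T - c1) ^ 2 + (cy T - c2) ^ 2)) as [[T [HT HTq]] | Hall].
    + destruct (horiz aa cx cy cz Hpw 0 T) as [E1 B1]; try lra.
      destruct (horiz aa cx cy cz Hpw T 1) as [E2 B2]; try lra.
      assert (HLs : L = RInt (speedf aa cx cy cz) 0 T + RInt (speedf aa cx cy cz) T 1).
      { unfold L. rewrite <- (RInt_Chasles _ 0 T 1 E1 E2). reflexivity. }
      set (sT := sqrt ((cx T - c1) ^ 2 + (cy T - c2) ^ 2)).
      assert (HsT : 3 * PI / 4 < sT).
      { unfold sT. rewrite <- (sqrt_pow2 (3 * PI / 4)) by lra. apply sqrt_lt_1_alt. split; [nra | auto]. }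
      assert (Hs0 : sqrt q0 < PI / 2) by (apply sqrt_lt_PI2; auto).
      assert (Hs1 : sqrt (X1 ^ 2 + Y1 ^ 2) < PI / 2).
      { apply sqrt_lt_PI2. fold X1 Y1 X0 Y0 in Hq. rewrite Hq. auto. }
      assert (T1 : sT <= sqrt ((cx T - cx 0) ^ 2 + (cy T - cy 0) ^ 2) + sqrt q0).
      { unfold sT, q0, X0, Y0.
        replace (cx T - c1) with ((cx T - cx 0) + (cx 0 - c1)) by ring.
        replace (cy T - c2) with ((cy T - cy 0) + (cy 0 - c2)) by ring. apply tri2. }
      assert (T2 : sT <= sqrt ((cx 1 - cx T) ^ 2 + (cy 1 - cy T) ^ 2) + sqrt (X1 ^ 2 + Y1 ^ 2)).
      { unfold sT, X1, Y1.
        replace (cx T - c1) with (-(cx 1 - cx T) + (cx 1 - c1)) by ring.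
        replace (cy T - c2) with (-(cy 1 - cy T) + (cy 1 - c2)) by ring.
        eapply Rle_trans. apply tri2.
        replace ((- (cx 1 - cx T)) ^ 2 + (- (cy 1 - cy T)) ^ 2) with ((cx 1 - cx T) ^ 2 + (cy 1 - cy T) ^ 2) by ring.
        lra. }
      lra.
    +
      assert (HG : forall u, 0 <= u <= 1 -> qf c1 c2 (cx u) (cy u) <= (3 * PI / 4) ^ 2).
      { intros u Hu. unfold qf. apply Rnot_lt_le. intro H. apply Hall. exists u. auto. }
      set (q1 := X1 ^ 2 + Y1 ^ 2).
      assert (Hq10 : q1 = q0) by (unfold q1, q0, X1, Y1, X0, Y0; exact Hq).
      set (E1 := Cf q1 * cos (cz 1)). set (E2 := Cf q1 * sin (cz 1)).
      set (E3 := Sf q1 * X1). set (E4 := Sf q1 * Y1).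
      assert (HE : E1 ^ 2 + E2 ^ 2 + E3 ^ 2 + E4 ^ 2 = 1).
      { unfold E1, E2, E3, E4.
        transitivity (Cf q1 ^ 2 * (sin (cz 1) ^ 2 + cos (cz 1) ^ 2) + q1 * Sf q1 ^ 2).
        unfold q1; ring. rewrite sc1. rewrite Rmult_1_r. apply CS_unit. rewrite Hq10; auto. }
      set (t := (Rmax L 0 + PI / 2) / 2).
      assert (Ht : 0 < t < PI / 2 /\ L < t).
      { unfold t. generalize (Rmax_l L 0) (Rmax_r L 0). intros. destruct (Rmax_Rle L 0 (PI/2)) as [_ ?].
        assert (Rmax L 0 < PI / 2). { unfold Rmax. destruct (Rle_dec L 0); lra. } lra. }
      assert (Hsin : 0 < sin t < 1).
      { split. apply sin_gt_0; lra. rewrite <- sin_PI2. apply sin_increasing_1; lra. }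
      set (m := / sin t).
      assert (Hm : 1 < m).
      { unfold m. apply (Rmult_lt_reg_r (sin t)). lra. rewrite Rinv_l by lra. lra. }
      assert (Hd : forall x y, distDelta aa x y <= sqrt (qf c1 c2 x y)).
      { intros x y. unfold qf. rewrite Hc1, Hc2. apply dD_le. }
      destruct (calib aa cx cy cz (PhiS c1 c2 E1 E2 E3 E4 m) (fun x y z => qf c1 c2 x y <= (3 * PI / 4) ^ 2)
        HG) with 0 1 as [_ B]; auto; try lra.
      { intros gx gy gz Cx Cy Cz u Hu. apply PhiS_ok; auto. }
      fold L in B.
      assert (Hb1 : betaf c1 c2 E1 E2 E3 E4 (cx 1) (cy 1) (cz 1) = 1).
      { unfold betaf. change (qf c1 c2 (cx 1) (cy 1)) with q1. fold X1 Y1.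
        transitivity (E1^2+E2^2+E3^2+E4^2); [| exact HE]. unfold E1, E2, E3, E4. ring. }
      assert (Hb0 : betaf c1 c2 E1 E2 E3 E4 (cx 0) (cy 0) (cz 0) = 0).
      { unfold betaf. change (qf c1 c2 (cx 0) (cy 0)) with q0. fold X0 Y0. rewrite <- Hq10.
        unfold E1, E2, E3, E4.
        transitivity (Cf q1 * Cf q1 * (cos (cz 1) * cos (cz 0) + sin (cz 1) * sin (cz 0))
          + Sf q1 * Sf q1 * (X0 * X1 + Y0 * Y1)). ring.
        rewrite <- cos_minus, Hz. fold X0 Y0 X1 Y1 in Horth. rewrite Horth. ring. }
      unfold PhiS in B. rewrite Hb1, Hb0 in B.
      replace (0 / m) with 0 in B by (field; lra). rewrite asin_0 in B.
      replace (1 / m) with (sin t) in B by (unfold m; field; lra).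
      rewrite asin_sin in B by lra. lra.
Qed.
From Stdlib Require Import FunctionalExtensionality.

Lemma cos_odd (k : Z) : cos (IZR (2 * k + 1) * (PI / 2)) = 0.
Proof.
  replace (IZR (2 * k + 1) * (PI / 2)) with (IZR k * PI + PI / 2)
    by (rewrite plus_IZR, mult_IZR; simpl; field).
  rewrite cos_plus, cos_PI2, sin_PI2. rewrite (sin_eq_0_1 (IZR k * PI)) by (exists k; reflexivity). ring.
Qed.

Lemma even_case cx cy cz (n : Z) : pw_smooth cx cy cz ->
  cz 1 = cz 0 + IZR n * (PI / 2) -> (n >= 2 \/ n <= -2)%Z ->
  PI / 2 <= RInt (speedf aa cx cy cz) 0 1.
Proof.
  intros Hpw Hz Hn. generalize PI_RGT_0; intro.
  destruct Hn as [Hn | Hn].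
  - assert (2 <= IZR n) by (apply IZR_le; lia).
    destruct (vert_gen cx cy cz (1/2) Hpw) with 0 1 as [_ B]; try lra.
    rewrite Rabs_right; lra. rewrite Hz in B. nra.
  - assert (IZR n <= -2) by (apply IZR_le; lia).
    destruct (vert_gen cx cy cz (-(1/2)) Hpw) with 0 1 as [_ B]; try lra.
    rewrite Rabs_Ropp, Rabs_right; lra. rewrite Hz in B. nra.
Qed.

Lemma lower_bound cx cy cz : noncontractible_loop aa cx cy cz -> PI / 2 <= h_length aa cx cy cz.
Proof.
  intros [Hpw [g [Hg [Hid Hend]]]].
  destruct (Gamma_NF aa g Hg) as [n [i [j Hn]]].
  rewrite Hn in Hend. unfold NF in Hend. injection Hend. intros Hz Hy Hx. clear Hend.
  change (h_length aa cx cy cz) with (RInt (speedf aa cx cy cz) 0 1).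
  generalize PI_RGT_0; intro HPI.
  pose proof (Z.div_mod n 4 ltac:(lia)) as Hdm.
  destruct (mod4_cases n) as [Hm|[Hm|[Hm|Hm]]].
  - destruct (Z.eq_dec n 0) as [Hn0 | Hn0].
    + subst n. unfold rotx, roty in Hx, Hy. simpl in Hx, Hy.
      destruct (Z.eq_dec i 0) as [Hi | Hi]; destruct (Z.eq_dec j 0) as [Hj | Hj].
      * exfalso. apply Hid. apply functional_extensionality. intros [[x y] z].
        rewrite Hn. subst i j. unfold NF, rotx, roty. simpl. f_equal; [f_equal|]; ring.
      * destruct (horiz aa cx cy cz Hpw 0 1) as [_ B]; try lra.
        eapply Rle_trans; [| exact B]. eapply Rle_trans; [| rewrite Rplus_comm; apply sqrt_ge_abs].
        rewrite Hy. replace (cy 0 + 4 * aa * IZR j - cy 0) with (4 * aa * IZR j) by ring.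
        rewrite Rabs_mult. replace (Rabs (4 * aa)) with (PI / 2) by (unfold aa; rewrite Rabs_right; lra).
        assert (1 <= Rabs (IZR j)). { rewrite <- abs_IZR. apply IZR_le. lia. } nra.
      * destruct (horiz aa cx cy cz Hpw 0 1) as [_ B]; try lra.
        eapply Rle_trans; [| exact B]. eapply Rle_trans; [| apply sqrt_ge_abs].
        rewrite Hx. replace (cx 0 + 4 * aa * IZR i - cx 0) with (4 * aa * IZR i) by ring.
        rewrite Rabs_mult. replace (Rabs (4 * aa)) with (PI / 2) by (unfold aa; rewrite Rabs_right; lra).
        assert (1 <= Rabs (IZR i)). { rewrite <- abs_IZR. apply IZR_le. lia. } nra.
      * destruct (horiz aa cx cy cz Hpw 0 1) as [_ B]; try lra.
        eapply Rle_trans; [| exact B]. eapply Rle_trans; [| apply sqrt_ge_abs].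
        rewrite Hx. replace (cx 0 + 4 * aa * IZR i - cx 0) with (4 * aa * IZR i) by ring.
        rewrite Rabs_mult. replace (Rabs (4 * aa)) with (PI / 2) by (unfold aa; rewrite Rabs_right; lra).
        assert (1 <= Rabs (IZR i)). { rewrite <- abs_IZR. apply IZR_le. lia. } nra.
    + apply (even_case cx cy cz n); auto. lia.
  -
    unfold rotx, roty in Hx, Hy. rewrite Hm in Hx, Hy.
    apply (odd_case cx cy cz (2 * aa * IZR (i - j)) (2 * aa * IZR (i + j)) (i - j) (i + j)); auto.
    + rewrite Hx, Hy, minus_IZR, plus_IZR. ring.
    + rewrite Hx, Hy, minus_IZR, plus_IZR. ring.
    + replace (cz 1 - cz 0) with (IZR n * (PI / 2)) by (rewrite Hz; ring).
      replace n with (2 * (2 * (n / 4)) + 1)%Z by lia. apply cos_odd.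
  - assert (n >= 2 \/ n <= -2)%Z by lia.
    apply (even_case cx cy cz n); auto.
  - unfold rotx, roty in Hx, Hy. rewrite Hm in Hx, Hy.
    apply (odd_case cx cy cz (2 * aa * IZR (i + j)) (2 * aa * IZR (j - i)) (i + j) (j - i)); auto.
    + rewrite Hx, Hy, minus_IZR, plus_IZR. ring.
    + rewrite Hx, Hy, minus_IZR, plus_IZR. ring.
    + replace (cz 1 - cz 0) with (IZR n * (PI / 2)) by (rewrite Hz; ring).
      replace n with (2 * (2 * (n / 4) + 1) + 1)%Z by lia. apply cos_odd.
Qed.

Lemma dD00 : distDelta aa 0 0 = 0.
Proof.
  apply Rle_antisym; [| apply dD_pos].
  eapply Rle_trans. apply (dD_le aa 0 0 0%Z 0%Z).
  replace ((0 - 2 * aa * IZR 0) ^ 2 + (0 - 2 * aa * IZR 0) ^ 2) with 0 by (simpl; ring).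
  rewrite sqrt_0; lra.
Qed.

Lemma C1_on_of (f : R -> R) s t : (forall u, ex_derive f u) -> (forall u, continuous (Derive f) u) -> C1_on f s t.
Proof. intros. exists f. split; auto. Qed.

Lemma upper_curve : exists cx cy cz,
  noncontractible_loop aa cx cy cz /\ PI / 2 = h_length aa cx cy cz.
Proof.
  generalize PI_RGT_0; intro HPI.
  assert (Dc : forall u, Derive (fun _ : R => 0) u = 0) by (intro; apply Derive_const).
  assert (Dz : forall u, is_derive (fun v : R => v * (PI / 2)) u (PI / 2)).
  { intro u. auto_derive. auto. ring. }
  assert (Dz' : forall u, Derive (fun v : R => v * (PI / 2)) u = PI / 2).
  { intro; apply is_derive_unique; apply Dz. }
  exists (fun _ => 0), (fun _ => 0), (fun v => v * (PI / 2)). split.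
  - split.
    + exists 1%nat, (fun k => INR k). simpl. split; [reflexivity|]. split; [reflexivity|].
      split.
      * intros i Hi. replace i with 0%nat by lia. simpl. lra.
      * assert (K0 : forall s t, C1_on (fun _ : R => 0) s t).
        { intros s t. apply C1_on_of. intro; apply ex_derive_const.
          intro u. apply (continuous_ext (fun _ => 0)). intro; rewrite Dc; reflexivity. apply continuous_const. }
        assert (K1 : forall s t, C1_on (fun v : R => v * (PI / 2)) s t).
        { intros s t. apply C1_on_of. intro u; eexists; apply Dz.
          intro u. apply (continuous_ext (fun _ => PI / 2)). intro; rewrite Dz'; reflexivity. apply continuous_const. }
        intros i Hi. split; [| split]; auto.
    + exists (fun p => tau ((fun p => p) p)). split; [| split].
      * apply Gamma_step. apply Gamma_id. unfold generator. do 6 right. left. reflexivity.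
      * intro H. assert (H' := f_equal (fun f => f (0, 0, 0)) H). simpl in H'.
        injection H'. intros. lra.
      * simpl. f_equal; [f_equal|]; ring.
  - unfold h_length. rewrite (RInt_ext _ (fun _ => PI / 2)).
    + rewrite RInt_const_R. ring.
    + intros x _. rewrite !Dc, Dz'. unfold h_speed2. rewrite dD00, cos_0.
      replace (0 ^ 2 + 0 ^ 2 + 1 ^ 2 * (PI / 2) ^ 2) with ((PI / 2) ^ 2) by ring.
      apply sqrt_pow2. lra.
Qed.

Lemma Sys_eq : Sys aa = Finite (PI / 2).
Proof.
  apply is_glb_Rbar_unique. split.
  - intros L [cx [cy [cz [H ->]]]]. simpl. apply lower_bound; auto.
  - intros b Hb. apply Hb. apply upper_curve.
Qed.

Theorem mainTheorem7 :
  Sys (PI / 8) = Finite (PI / 2) /\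
  (real (Sys (PI / 8))) ^ 3 / Vol (PI / 8) > 1.
Proof.
  change (PI / 8) with aa. rewrite Sys_eq. split; [reflexivity|].
  simpl real. destruct Vol_bounds as [V1 V2]. fold bb.
  apply Rlt_gt. apply (Rmult_lt_reg_r (Vol aa)); auto.
  unfold Rdiv. rewrite Rmult_assoc, Rinv_l by lra. lra.
Qed.
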